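(* Let $(\mathcal{M}^n,g)$ be a mixed super quasi-Einstein manifold (notation as in the context) which is conformal Ricci pseudosymmetric, i.e. there is a function $F_{\mathrm{Ric}}$ on $U_{\mathrm{Ric}}=\{x\in\mathcal{M}:\mathrm{Ric}\neq\frac{r}{n}g \text{ at } x\}$ such that on $U_{\mathrm{Ric}}$, for all $X,Y,Z,W$, $\mathrm{Ric}(C(X,Y)Z,W)+\mathrm{Ric}(Z,C(X,Y)W)=F_{\mathrm{Ric}}\big(g(Y,Z)\mathrm{Ric}(X,W)-g(X,Z)\mathrm{Ric}(Y,W)+g(Y,W)\mathrm{Ric}(X,Z)-g(X,W)\mathrm{Ric}(Y,Z)\big)$. Put $m=-\frac{(n-2)R(\xi_2,\xi_1,\xi_1,\xi_2)}{\Psi_5}+\mathcal{D}(\xi_2,\xi_2)$ and define the 1-form $\mathcal{E}(X)=\Big(R(\xi_2,\xi_1,\xi_1,\xi_2)-\frac{\Psi_5}{n-2}\mathcal{D}(\xi_2,\xi_2)\Big)\mathcal{B}(X)+\frac{\Psi_5}{n-2}\mathcal{D}(X,\xi_2)$. Then on $U_{\mathrm{Ric}}$: (1) if $m$ is not an eigenvalue of $\mathcal{D}$ corresponding to the eigenvector $\xi_2$, then $R(X,Y,\xi_1,\xi_2)=\mathcal{E}(X)\mathcal{A}(Y)-\mathcal{A}(X)\mathcal{E}(Y)$ for all $X,Y$; (2) if $m$ is an eigenvalue of $\mathcal{D}$ corresponding to the eigenvector $\xi_2$, then $R(X,Y,\xi_1,\xi_2)=0$ for all $X,Y$.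
   Context: $(\mathcal{M}^n,g)$, $n\ge 3$, is a non-flat Riemannian manifold with Levi-Civita connection $\nabla$, curvature $R(X,Y)Z=\nabla_X\nabla_YZ-\nabla_Y\nabla_XZ-\nabla_{[X,Y]}Z$, $R(X,Y,Z,W)=g(R(X,Y)Z,W)$, Ricci tensor $\mathrm{Ric}(Y,Z)=\operatorname{trace}(X\mapsto R(X,Y)Z)$, Ricci operator $Q$ ($\mathrm{Ric}(X,Y)=g(QX,Y)$), scalar curvature $r$. The conformal curvature tensor is $C(X,Y)Z=R(X,Y)Z-\frac{1}{n-2}\big(\mathrm{Ric}(Y,Z)X-\mathrm{Ric}(X,Z)Y+g(Y,Z)QX-g(X,Z)QY\big)+\frac{r}{(n-1)(n-2)}\big(g(Y,Z)X-g(X,Z)Y\big)$. $\mathcal{M}$ is a mixed super quasi-Einstein manifold if $\mathrm{Ric}$ is not identically zero and $\mathrm{Ric}(X,Y)=\Psi_1 g(X,Y)+\Psi_2\mathcal{A}(X)\mathcal{A}(Y)+\Psi_3\mathcal{B}(X)\mathcal{B}(Y)+\Psi_4(\mathcal{A}(X)\mathcal{B}(Y)+\mathcal{B}(X)\mathcal{A}(Y))+\Psi_5\mathcal{D}(X,Y)$, where $\Psi_1,\dots,\Psi_5$ are smooth functions with $\Psi_2,\Psi_3,\Psi_4,\Psi_5\neq 0$; $\xi_1,\xi_2$ are vector fields with $g(\xi_1,\xi_1)=g(\xi_2,\xi_2)=1$, $g(\xi_1,\xi_2)=0$; $\mathcal{A}(X)=g(X,\xi_1)$, $\mathcal{B}(X)=g(X,\xi_2)$;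 $\mathcal{D}$ is a symmetric trace-free $(0,2)$-tensor with $\mathcal{D}(X,\xi_1)=0$ for all $X$. A number/function $b$ is an eigenvalue of $\mathcal{D}$ corresponding to the eigenvector $U$ if $\mathcal{D}(X,U)=b\,g(X,U)$ for all $X$. *)

(* Defs.v *)
(* Pointwise (tangent-space) model of the statement. *)
From HB Require Import structures.
From mathcomp Require Import all_boot all_order all_algebra.
From mathcomp Require Import reals.
Set Implicit Arguments. Unset Strict Implicit. Unset Printing Implicit Defensive.
Import Order.TTheory GRing.Theory Num.Theory.
Local Open Scope ring_scope.

Section Tangent.
Variables (R : realType) (n : nat).
Notation V := 'rV[R]_n.

(* the metric g at the point, in an orthonormal frame *)
Definition gm (u v : V) : R := \sum_(i < n) u 0 i * v 0 i.
Definition ev (i : 'I_n) : V := delta_mx 0 i.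

Definition curv_op := V -> V -> V -> V.

Definition is_curvature (Rm : curv_op) : Prop :=
  [/\ (forall a X X' Y Z, Rm (a *: X + X') Y Z = a *: Rm X Y Z + Rm X' Y Z),
      (forall a X Y Y' Z, Rm X (a *: Y + Y') Z = a *: Rm X Y Z + Rm X Y' Z),
      (forall a X Y Z Z', Rm X Y (a *: Z + Z') = a *: Rm X Y Z + Rm X Y Z'),
      (forall X Y Z, Rm X Y Z = - Rm Y X Z)
    & ((forall X Y Z W, gm (Rm X Y Z) W = - gm (Rm X Y W) Z)
       /\ (forall X Y Z, Rm X Y Z + Rm Y Z X + Rm Z X Y = 0))].

Variable Rm : curv_op.

Definition Rcov (X Y Z W : V) : R := gm (Rm X Y Z) W.
Definition Ric (Y Z : V) : R := \sum_(i < n) (Rm (ev i) Y Z) 0 i.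
Definition Qop (X : V) : V := \sum_(i < n) Ric X (ev i) *: ev i.
Definition scal : R := \sum_(i < n) Ric (ev i) (ev i).

Definition Conf (X Y Z : V) : V :=
  Rm X Y Z
  - (n%:R - 2)^-1 *: (Ric Y Z *: X - Ric X Z *: Y + gm Y Z *: Qop X - gm X Z *: Qop Y)
  + (scal / ((n%:R - 1) * (n%:R - 2))) *: (gm Y Z *: X - gm X Z *: Y).

Definition in_U_Ric : Prop :=
  ~ (forall X Y, Ric X Y = scal / n%:R * gm X Y).

Definition conf_ricci_pseudosym_with (F : R) : Prop :=
  forall X Y Z W,
    Ric (Conf X Y Z) W + Ric Z (Conf X Y W) =
    F * (gm Y Z * Ric X W - gm X Z * Ric Y W + gm Y W * Ric X Z - gm X W * Ric Y Z).

Definition is_MSQE (Psi1 Psi2 Psi3 Psi4 Psi5 : R) (xi1 xi2 : V) (D : V -> V -> R) : Prop :=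
  [/\ ~ (forall X Y, Ric X Y = 0),
      [/\ Psi2 != 0, Psi3 != 0, Psi4 != 0 & Psi5 != 0],
      [/\ gm xi1 xi1 = 1, gm xi2 xi2 = 1 & gm xi1 xi2 = 0],
      [/\ (forall a X X' Y, D (a *: X + X') Y = a * D X Y + D X' Y),
          (forall X Y, D X Y = D Y X),
          \sum_(i < n) D (ev i) (ev i) = 0
        & (forall X, D X xi1 = 0)]
    & (forall X Y, Ric X Y =
         Psi1 * gm X Y + Psi2 * (gm X xi1 * gm Y xi1) + Psi3 * (gm X xi2 * gm Y xi2)
         + Psi4 * (gm X xi1 * gm Y xi2 + gm X xi2 * gm Y xi1) + Psi5 * D X Y)].

End Tangent.

Definition is_eigen (R : realType) (n : nat) (D : 'rV[R]_n -> 'rV[R]_n -> R)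
  (b : R) (U : 'rV[R]_n) : Prop :=
  forall X, D X U = b * gm X U.

(* Main.v *)
Require Import Defs.
From HB Require Import structures.
From mathcomp Require Import all_boot all_order all_algebra.
From mathcomp Require Import reals.
From mathcomp Require Import ring lra.
Import Order.TTheory GRing.Theory Num.Theory.
Local Open Scope ring_scope.

Section H.
Variables (R : realType) (n : nat).
Implicit Types (u v w : 'rV[R]_n).

Lemma gmC u v : gm u v = gm v u.
Proof. by rewrite /gm; apply: eq_bigr => i _; rewrite mulrC. Qed.
Lemma gmD u v w : gm (u + v) w = gm u w + gm v w.
Proof. by rewrite /gm -big_split; apply: eq_bigr => i _; rewrite mxE mulrDl. Qed.
Lemma gmZ a u w : gm (a *: u) w = a * gm u w.
Proof. by rewrite /gm mulr_sumr; apply: eq_bigr => i _; rewrite mxE mulrA. Qed.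
Lemma gmN u w : gm (- u) w = - gm u w.
Proof. by rewrite -scaleN1r gmZ mulN1r. Qed.
Lemma gm_ev i w : gm (ev R i) w = w 0 i.
Proof.
rewrite /gm (bigD1 i) //= big1 ?addr0.
  by rewrite /ev mxE !eqxx mul1r.
by move=> j /negbTE ji; rewrite /ev mxE ji andbF mul0r.
Qed.

Lemma lin_sum (f : 'rV[R]_n -> R) :
  (forall a u v, f (a *: u + v) = a * f u + f v) ->
  forall w, f w = \sum_(i < n) w 0 i * f (ev R i).
Proof.
move=> fl w.
have f0 : f 0 = 0.
  have := fl 1 0 0; rewrite scale1r addr0 mul1r => h.
  by apply: (addrI (f 0)); rewrite addr0 -h.
have fD : forall x y, f (x + y) = f x + f y.
  by move=> x y; rewrite -{1}[x]scale1r fl mul1r.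
rewrite {1}(row_sum_delta w) (big_morph f fD f0).
by apply: eq_bigr => i _; rewrite -[_ *: _]addr0 fl f0 addr0.
Qed.

Lemma gmQ (Rm : curv_op R n) u w :
  (forall a X Y Z Z', Rm X Y (a *: Z + Z') = a *: Rm X Y Z + Rm X Y Z') ->
  gm (Qop Rm u) w = Ric Rm u w.
Proof.
move=> lin.
have ->: gm (Qop Rm u) w = \sum_(i < n) Ric Rm u (ev R i) * w 0 i.
  rewrite /Qop (big_morph (fun x => gm x w) (fun x y => gmD x y w) (_ : gm 0 w = 0)).
    by apply: eq_bigr => i _; rewrite gmZ gm_ev.
  by rewrite /gm big1 // => i _; rewrite mxE mul0r.
rewrite (@lin_sum (Ric Rm u)).
  by apply: eq_bigr => i _; rewrite mulrC.
move=> a v v'; rewrite /Ric mulr_sumr -big_split; apply: eq_bigr => i _.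
by rewrite lin !mxE.
Qed.
End H.

Theorem mainTheorem3 (R : realType) (n : nat) (Rm : curv_op R n)
  (Psi1 Psi2 Psi3 Psi4 Psi5 : R) (xi1 xi2 : 'rV[R]_n)
  (D : 'rV[R]_n -> 'rV[R]_n -> R) (F : R) :
  (3 <= n)%N ->
  is_curvature Rm ->
  is_MSQE Rm Psi1 Psi2 Psi3 Psi4 Psi5 xi1 xi2 D ->
  in_U_Ric Rm ->
  conf_ricci_pseudosym_with Rm F ->
  let m := - ((n%:R - 2) * Rcov Rm xi2 xi1 xi1 xi2) / Psi5 + D xi2 xi2 in
  let E := fun X : 'rV[R]_n =>
    (Rcov Rm xi2 xi1 xi1 xi2 - Psi5 / (n%:R - 2) * D xi2 xi2) * gm X xi2
    + Psi5 / (n%:R - 2) * D X xi2 in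
  (~ is_eigen D m xi2 ->
     forall X Y, Rcov Rm X Y xi1 xi2 = E X * gm Y xi1 - gm X xi1 * E Y) /\
  (is_eigen D m xi2 ->
     forall X Y, Rcov Rm X Y xi1 xi2 = 0).
Proof.
move=> n3 [l1 l2 l3 skXY [met bian]] [nz [p2 p3 p4 p5] [g11 g22 g12] [Dl Dsym Dtr Dxi1] HRic] _ HF m E.
have hn : (n%:R - 2 : R) != 0.
  by rewrite subr_eq0 gt_eqF // (ltr_nat R 2 n).
have g21 : gm xi2 xi1 = 0 by rewrite gmC.
have RicS X Y : Ric Rm X Y = Ric Rm Y X.
  by rewrite !HRic Dsym [gm X Y]gmC; ring.
have Ric1 U : Ric Rm U xi1 = (Psi1 + Psi2) * gm U xi1 + Psi4 * gm U xi2.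
  by rewrite HRic Dxi1 g11 g12; ring.
have Ric2 U : Ric Rm U xi2 = (Psi1 + Psi3) * gm U xi2 + Psi4 * gm U xi1 + Psi5 * D U xi2.
  by rewrite HRic g22 g21; ring.
have met0 X Y : gm (Rm X Y xi1) xi1 = 0.
  by have h := met X Y xi1 xi1; lra.
set s := (n%:R - 2 : R)^-1.
set t := scal Rm / ((n%:R - 1) * (n%:R - 2)).
have HK X Y : Rcov Rm X Y xi1 xi2 =
   (F + s * (2 * Psi1 + Psi2 + Psi3) - t) * (gm X xi2 * gm Y xi1 - gm X xi1 * gm Y xi2)
   + s * Psi5 * (gm Y xi1 * D X xi2 - gm X xi1 * D Y xi2).
  have h := HF X Y xi1 xi1.
  rewrite [Ric Rm xi1 (Conf _ _ _ _)]RicS !Ric1 /Conf in h.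
  rewrite !(gmD, gmN, gmZ) !gmQ // !Ric1 !Ric2 ?met0 ?g11 ?g12 ?g21 -/s -/t in h.
  rewrite /Rcov; apply: (mulfI p4).
  lra.
have P1 X Y : Rcov Rm X Y xi1 xi2 = E X * gm Y xi1 - gm X xi1 * E Y.
  rewrite /E [Rcov Rm xi2 xi1 xi1 xi2]HK !HK g11 g22 g21 -/s.
  ring.
split=> [_|hE] //.
have h2 := hE xi2; rewrite g22 mulr1 /m in h2.
have R0 : Rcov Rm xi2 xi1 xi1 xi2 = 0.
  have : (n%:R - 2) * Rcov Rm xi2 xi1 xi1 xi2 / Psi5 = 0.
    by apply/eqP; rewrite -oppr_eq0; apply/eqP; rewrite -mulNr; lra.
  by move/eqP; rewrite mulf_eq0 invr_eq0 (negbTE p5) orbF mulf_eq0 (negbTE hn) /= => /eqP.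
move=> X Y; rewrite P1 /E !hE g22 R0; ring.
Qed.
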